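(* Let $n\ge 2$ and let $P$ be an $n\times n$ permutation matrix. Then $P$ is the leaf matrix of exactly one CNM of size $n$ if and only if (a) for every $k$ with $2\le k\le n-1$ the $k$-th L-subset of $P$ contains exactly one entry equal to $1$, and (b) $P$ has no entry equal to $1$ on its main diagonal.
   Context: A complete non-ambiguous matrix (CNM) of size $n$ is an $n\times n$ matrix $M=(m_{i,j})$ with entries in $\{0,1\}$ whose support $T=\{(i,j): m_{i,j}=1\}$ (whose elements are called vertices) satisfies: (1) $(1,1)\in T$; (2) for every $p=(i,j)\in T$ with $p\neq(1,1)$, exactly one of the following holds: there is $(i',j)\in T$ with $i'<i$, or there is $(i,j')\in T$ with $j'<j$; (3) every row and every column of $M$ contains at least one vertex; (4) define the parent of $p=(i,j)\neq(1,1)$ to be $(i',j)$ with $i'<i$ maximal if such a vertex exists, and otherwise $(i,j')$ with $j'<j$ maximal; then every vertex is the parent of either zero or exactly two vertices. A vertex with no children is a leaf. The leaf matrix $p(M)$ is obtained from $M$ by replacing all non-leaf vertices by $0$ (it is a permutation matrix). For an $n\times n$ matrix and $k>1$, the $k$-th L-subset is the set of positions $\{(i,j): (i=k \text{ and } j\le k) \text{ or } (j=k \text{ and } i\le k)\}$. *)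

(* Defs.v *)
From mathcomp Require Import all_boot all_order all_algebra all_fingroup.
Set Implicit Arguments. Unset Strict Implicit. Unset Printing Implicit Defensive.
Import GRing.Theory.
Local Open Scope ring_scope.

(* Matrices are n x n over int, indexed by 'I_n (0-based: paper's row i is
   index i-1). Vertices = positions carrying the entry 1. *)
Section CNM.
Variable n : nat.
Implicit Types (M : 'M[int]_n) (p q : 'I_n * 'I_n).

Definition zero_one M : Prop := forall i j, M i j = 0 \/ M i j = 1.

Definition vertex M p : bool := M p.1 p.2 == 1.

Definition is_root p : bool := (val p.1 == 0%N) && (val p.2 == 0%N).

Definition has_above M p : bool :=
  [exists i' : 'I_n, (val i' < val p.1)%N && vertex M (i', p.2)].
Definition has_left M p : bool :=
  [exists j' : 'I_n, (val j' < val p.2)%N && vertex M (p.1, j')].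

Definition is_parent M q p : bool :=
  vertex M p && ~~ is_root p && vertex M q &&
  (if has_above M p then
     (q.2 == p.2) && (val q.1 < val p.1)%N &&
     [forall i' : 'I_n, ((val q.1 < val i')%N && (val i' < val p.1)%N)
                          ==> ~~ vertex M (i', p.2)]
   else
     (q.1 == p.1) && (val q.2 < val p.2)%N &&
     [forall j' : 'I_n, ((val q.2 < val j')%N && (val j' < val p.2)%N)
                          ==> ~~ vertex M (p.1, j')]).

Definition children M q : {set 'I_n * 'I_n} := [set p | is_parent M q p].

Definition is_CNM M : Prop :=
  [/\ zero_one M,
      (forall p, is_root p -> vertex M p),
      (forall p, vertex M p -> ~~ is_root p ->
                   (has_above M p (+) has_left M p)),
      (forall i : 'I_n, exists j : 'I_n, vertex M (i, j))
                /\ (forall j : 'I_n, exists i : 'I_n, vertex M (i, j))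
    & (forall q, vertex M q ->
                   #|children M q| = 0%N \/ #|children M q| = 2%N)].

Definition is_leaf M p : bool := vertex M p && (#|children M p| == 0%N).

Definition leaf_mx M : 'M[int]_n :=
  \matrix_(i, j) (if is_leaf M (i, j) then 1 else 0).

(* k-th L-subset, k given 1-based as in the paper *)
Definition Lsubset (k : nat) : {set 'I_n * 'I_n} :=
  [set p | (((val p.1).+1 == k) && ((val p.2).+1 <= k)%N)
        || (((val p.2).+1 == k) && ((val p.1).+1 <= k)%N)].

End CNM.

(* Main.v *)
Require Import Defs.
From mathcomp Require Import all_boot all_order all_algebra all_fingroup zify.
Set Implicit Arguments. Unset Strict Implicit. Unset Printing Implicit Defensive.

Definition pax (n : nat) (sg tg : nat -> nat) :=
  [/\ (forall i, i < n -> sg i < n), (forall i, i < n -> tg i < n),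
      (forall i, i < n -> tg (sg i) = i) & (forall i, i < n -> sg (tg i) = i)].

Lemma pax_sym n sg tg : pax n sg tg -> pax n tg sg.
Proof. by case. Qed.

Definition hv (n : nat) (sg tg a b : nat -> nat) :=
  [/\ a 0 = 0, (forall i, 0 < i -> i < n -> b (a i) < i) &
      (forall i, i < n -> [/\ a i <= sg i, (a i = sg i \/ b (sg i) = i) & i <= tg (a i)])].

Definition valid n sg tg a b := hv n sg tg a b /\ hv n tg sg b a.

Lemma valid_sym n sg tg a b : valid n sg tg a b -> valid n tg sg b a.
Proof. by case. Qed.

Definition Ot (sg : nat -> nat) k o := [/\ o < k, k <= sg o & forall i, i < k -> k <= sg i -> i = o].

Definition diff n (a b a' b' : nat -> nat) := exists i, i < n /\ (a' i <> a i \/ b' i <> b i).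

Definition upd (f : nat -> nat) x v := fun y => if y == x then v else f y.

Lemma updE f x v y : upd f x v y = if y == x then v else f y.
Proof. by []. Qed.

Section Basic.
Variables (n : nat) (sg tg a b : nat -> nat).
Hypothesis (P : pax n sg tg) (V : valid n sg tg a b).

Lemma sgn i : i < n -> sg i < n. Proof. by case: P => H _ _ _; apply: H. Qed.
Lemma tgn i : i < n -> tg i < n. Proof. by case: P => _ H _ _; apply: H. Qed.
Lemma tgsg i : i < n -> tg (sg i) = i. Proof. by case: P => _ _ H _; apply: H. Qed.
Lemma sgtg i : i < n -> sg (tg i) = i. Proof. by case: P => _ _ _ H; apply: H. Qed.

Lemma a0 : a 0 = 0. Proof. by case: V => [[]]. Qed.
Lemma b0 : b 0 = 0. Proof. by case: V => _ []. Qed.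
Lemma V1 i : 0 < i -> i < n -> b (a i) < i. Proof. by case: V => [[_ H _]] _; apply: H. Qed.
Lemma V2 j : 0 < j -> j < n -> a (b j) < j. Proof. by case: V => _ [_ H _]; apply: H. Qed.
Lemma V3 i : i < n -> [/\ a i <= sg i, (a i = sg i \/ b (sg i) = i) & i <= tg (a i)].
Proof. by case: V => [[_ _ H]] _; apply: H. Qed.
Lemma V4 j : j < n -> [/\ b j <= tg j, (b j = tg j \/ a (tg j) = j) & j <= sg (b j)].
Proof. by case: V => _ [_ _ H]; apply: H. Qed.

Lemma an i : i < n -> a i < n.
Proof. move=> Hi; case: (V3 Hi) => H _ _; have := sgn Hi; lia. Qed.
Lemma bn j : j < n -> b j < n.
Proof. move=> Hj; case: (V4 Hj) => H _ _; have := tgn Hj; lia. Qed.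

End Basic.


Lemma php n sg tg k : pax n sg tg -> k <= n -> (forall i, i < k -> sg i < k) ->
  forall j, j < k -> tg j < k.
Proof.
move=> P kn H j jk.
pose f (i : 'I_k) : 'I_k := Ordinal (H i (ltn_ord i)).
have finj : injective f.
  move=> x y /(congr1 val) /= E; apply: val_inj => /=.
  have xn : x < n by have := ltn_ord x; lia.
  have yn : y < n by have := ltn_ord y; lia.
  by rewrite -(tgsg P xn) E (tgsg P yn).
have := injF_onto finj (Ordinal jk); case/codomP => x /(congr1 val) /= ->.
by rewrite (tgsg P) //; have := ltn_ord x; lia.
Qed.

Lemma G2 n sg tg a b k : pax n sg tg -> valid n sg tg a b -> 0 < k -> k < n ->
  exists i, i < k /\ k <= sg i.
Proof.
move=> P V k0 kn.
case: (boolP [exists i : 'I_k, k <= sg i]).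
  by case/existsP => i Hi; exists i.
move=> /existsPn H.
have H1 : forall i, i < k -> sg i < k.
  move=> i ik; have := H (Ordinal ik); rewrite /= -ltnNge; done.
have H2 := php P (ltnW kn) H1.
case: (V3 V kn) => _ _ Ht.
have akn := an P V kn.
case: (ltnP (a k) k) => Hak.
  have := H2 _ Hak; lia.
have := V1 V k0 kn.
move=> Hb.
case: (V4 V akn) => _ _ Hs.
have := H1 _ Hb; lia.
Qed.

Lemma sg0 n sg tg a b : pax n sg tg -> valid n sg tg a b -> 1 < n -> sg 0 <> 0.
Proof. move=> P V n1; case: (G2 P V (isT : 0 < 1) n1) => i [i1 Hi]; have E : i = 0 by lia. rewrite E in Hi; lia. Qed.

Section Tight.
Variables (n : nat) (sg tg a b : nat -> nat) (m o o' : nat).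
Hypotheses (P : pax n sg tg) (V : valid n sg tg a b) (m1 : 0 < m) (mn : m < n)
  (O : Ot sg m o) (O' : Ot tg m o').

Lemma o_lt : o < m. Proof. by case: O. Qed.
Lemma o'_lt : o' < m. Proof. by case: O'. Qed.
Lemma sgo : m <= sg o. Proof. by case: O. Qed.
Lemma tgo' : m <= tg o'. Proof. by case: O'. Qed.
Lemma Ouniq i : i < m -> m <= sg i -> i = o. Proof. by case: O => _ _; apply. Qed.
Lemma O'uniq i : i < m -> m <= tg i -> i = o'. Proof. by case: O' => _ _; apply. Qed.

Lemma ao_lt : a o < m.
Proof.
have om := o_lt; have on : o < n by lia.
case: (posnP o) => [->|o0]; first by rewrite (a0 V).
case: (ltnP (a o) m) => // H.
have Hb := V1 V o0 on.
have aon := an P V on.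
case: (V4 V aon) => _ _ Hs.
have := Ouniq (i := b (a o)); lia.
Qed.

End Tight.

Lemma bo'_lt n sg tg a b m o' : pax n sg tg -> valid n sg tg a b -> 0 < m -> m < n ->
  Ot tg m o' -> b o' < m.
Proof. move=> P V m0 mn O'; exact: (ao_lt (pax_sym P) (valid_sym V) m0 mn O'). Qed.


Section Moves.
Variables (n : nat) (sg tg a b : nat -> nat) (m o o' : nat).
Hypotheses (P : pax n sg tg) (V : valid n sg tg a b) (m1 : 0 < m) (mn : m < n)
  (O : Ot sg m o) (O' : Ot tg m o').

Let om := o_lt O.
Let o'm := o'_lt O'.
Let on : o < n. Proof. lia. Qed.
Let o'n : o' < n. Proof. lia. Qed.
Let ao := ao_lt P V m1 mn O.
Let bo' := bo'_lt P V m1 mn O'.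
Let sgo := sgo O.
Let tgo' := tgo' O'.

Lemma moveF : sg m = m -> a m = m ->
  exists a' b', valid n sg tg a' b' /\ diff n a b a' b'.
Proof.
move=> sgm am.
have tgm : tg m = m by rewrite -{1}sgm (tgsg P).
have bm : b m = o.
  have := V1 V m1 mn; rewrite am => H.
  case: (V4 V mn) => _ _ H2.
  by apply: (Ouniq O) => //.
have f3 : forall j, j < n -> j != m -> b j != m.
  move=> j jn jm; apply/eqP => bj.
  case: (V4 V jn) => H1 _ H2; rewrite bj sgm in H2; rewrite bj in H1.
  have jm' : j < m by lia.
  have Ej := O'uniq O' jm' H1.
  by move: bo'; rewrite -Ej bj ltnn.
have f4 : forall i, i < n -> i != m -> a i != m.
  move=> i iN im; apply/eqP => ai.
  case: (V3 V iN) => H1 _ H2; rewrite ai tgm in H2; rewrite ai in H1.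
  have im' : i < m by lia.
  have Ei := Ouniq O im' H1.
  by move: ao; rewrite -Ei ai ltnn.
exists (upd a m o'), (upd b m m); split; last first.
  by exists m; split => //; left; rewrite /upd eqxx; lia.
split; split.
- by rewrite /upd ifN_eq; [exact: a0 V | apply/eqP; lia].
- move=> i i0 iN; rewrite /upd; case: (eqVneq i m) => [->|im].
    by rewrite ?eqxx ifN_eq //; apply/eqP; lia.
  by rewrite (negbTE (f4 _ iN im)); exact: (V1 V i0 iN).
- move=> i iN; rewrite /upd; case: (eqVneq i m) => [->|im].
    by rewrite ?eqxx sgm ?eqxx; split; [lia | right | lia].
  case: (V3 V iN) => H1 H2 H3; split => //.
  case: H2 => [->|H2]; first by left.
  right; rewrite ifN_eq //; apply/eqP => E; move: im; rewrite -(tgsg P iN) E tgm eqxx //.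
- by rewrite /upd ifN_eq; [exact: b0 V | apply/eqP; lia].
- move=> j j0 jN; rewrite /upd; case: (eqVneq j m) => [->|jm].
    by rewrite ?eqxx.
  by rewrite (negbTE (f3 _ jN jm)); exact: (V2 V j0 jN).
- move=> j jN; rewrite /upd; case: (eqVneq j m) => [->|jm].
    by rewrite ?eqxx tgm sgm; split => //; left.
  case: (V4 V jN) => H1 H2 H3; split => //.
  case: H2 => [->|H2]; first by left.
  right; rewrite ifN_eq //; apply/eqP => E; move: jm; rewrite -(sgtg P jN) E sgm ?eqxx //.
Qed.


Lemma moveM1 : m < b m -> exists a' b', valid n sg tg a' b' /\ diff n a b a' b'.
Proof.
move=> rm; set r := b m in rm *.
have rn : r < n by exact: (bn P V mn).
have ar : a r < m by exact: (V2 V m1 mn).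
have sgr : m <= sg r by case: (V4 V mn).
have tgm : r <= tg m by case: (V4 V mn).
have d4 : forall j, j < n -> j != m -> b j = r -> m < j.
  move=> j jn jm bj; case: (ltnP m j) => // jm'.
  have jm2 : j < m by lia.
  case: (V4 V jn) => H1 _ _; rewrite bj in H1.
  have Ej := O'uniq O' jm2 (leq_trans (ltnW rm) H1).
  by move: bo'; rewrite -Ej bj; lia.
have e1 : forall i, i < n -> a i = m -> m < i.
  move=> i iN ai; case: (ltnP m i) => // im.
  case: (eqVneq i m) => [Eim|im2].
    have := V1 V m1 mn; rewrite -{1}Eim ai -/r; lia.
  have im3 : i < m by lia.
  case: (V3 V iN) => H1 _ _; rewrite ai in H1.
  have Ei := Ouniq O im3 H1.
  by move: ao; rewrite -Ei ai ltnn.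
exists (upd a r m), (upd b m o); split; last first.
  by exists m; split => //; right; rewrite /upd eqxx -/r; lia.
split; split.
- by rewrite /upd ifN_eq; [exact: a0 V | apply/eqP; lia].
- move=> i i0 iN; rewrite /upd; case: (eqVneq i r) => [->|ir].
    by rewrite ?eqxx; lia.
  case: (eqVneq (a i) m) => [aim|aim].
    by rewrite ?aim ?eqxx; have := e1 _ iN aim; lia.
  exact: (V1 V i0 iN).
- move=> i iN; rewrite /upd; case: (eqVneq i r) => [->|ir].
    rewrite ?eqxx; split => //.
    case: (eqVneq (sg r) m) => [->|sm]; first by left.
    right.
    case: (V3 V rn) => _ [H|H] _ //; lia.
  case: (V3 V iN) => H1 H2 H3; split => //.
  case: H2 => [->|H2]; first by left.
  right; rewrite ifN_eq //; apply/eqP => E; move: ir; rewrite -H2 E eqxx //.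
- by rewrite /upd ifN_eq; [exact: b0 V | apply/eqP; lia].
- move=> j j0 jN; rewrite /upd; case: (eqVneq j m) => [->|jm].
    rewrite ?eqxx ifN_eq; [lia | apply/eqP; lia].
  case: (eqVneq (b j) r) => [bjr|bjr].
    by rewrite ?bjr ?eqxx; apply: d4.
  exact: (V2 V j0 jN).
- move=> j jN; rewrite /upd; case: (eqVneq j m) => [->|jm].
    rewrite ?eqxx; split; [lia | | lia].
    case: (eqVneq (tg m) r) => [->|tr]; first by right.
    right.
    by case: (V4 V mn) => _ [H|H] _ //; move: tr; rewrite -H -/r eqxx.
  case: (V4 V jN) => H1 H2 H3; split => //.
  case: H2 => [->|H2]; first by left.
  right; rewrite ifN_eq //; apply/eqP => E.
  have : sg r = j by rewrite -E (sgtg P jN).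
  move=> sgrj; rewrite E in H2; lia.
Qed.

Lemma move_ii : m < sg m -> a m = m -> b m = o ->
  exists a' b', valid n sg tg a' b' /\ diff n a b a' b'.
Proof.
move=> sgm am bm.
exists (upd a m o'), b; split; last first.
  by exists m; split => //; left; rewrite /upd eqxx; lia.
split; split.
- by rewrite /upd ifN_eq; [exact: a0 V | apply/eqP; lia].
- move=> i i0 iN; rewrite /upd; case: (eqVneq i m) => [->|im].
    by rewrite ?eqxx.
  exact: (V1 V i0 iN).
- move=> i iN; rewrite /upd; case: (eqVneq i m) => [->|im].
    rewrite ?eqxx; split; [lia | right | lia].
    by case: (V3 V mn) => _ [H|H] _ //; lia.
  exact: (V3 V iN).
- exact: b0 V.
- move=> j j0 jN; rewrite /upd; case: (eqVneq (b j) m) => [bjm|bjm].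
    have := V2 V j0 jN; rewrite bjm am; lia.
  exact: (V2 V j0 jN).
- move=> j jN; case: (V4 V jN) => H1 H2 H3; split => //.
  case: H2 => [->|H2]; first by left.
  right; rewrite /upd ifN_eq //; apply/eqP => E.
  move: H2; rewrite E am => Ej.
  have := sgtg P jN; rewrite E; lia.
Qed.

Lemma move_i : m < sg m -> m <= tg m -> a m = o' -> b m = o ->
  exists a' b', valid n sg tg a' b' /\ diff n a b a' b'.
Proof.
move=> sgm tgm am bm.
exists (upd a m m), b; split; last first.
  by exists m; split => //; left; rewrite /upd eqxx; lia.
split; split.
- by rewrite /upd ifN_eq; [exact: a0 V | apply/eqP; lia].
- move=> i i0 iN; rewrite /upd; case: (eqVneq i m) => [->|im].
    by rewrite ?eqxx bm.
  exact: (V1 V i0 iN).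
- move=> i iN; rewrite /upd; case: (eqVneq i m) => [->|im].
    rewrite ?eqxx; split; [lia | right | lia].
    by case: (V3 V mn) => _ [H|H] _ //; lia.
  exact: (V3 V iN).
- exact: b0 V.
- move=> j j0 jN; rewrite /upd; case: (eqVneq (b j) m) => [bjm|bjm].
    case: (ltnP m j) => // jm.
    case: (eqVneq j m) => [Ej|jm2].
      by move: bjm; rewrite Ej bm; lia.
    have jm3 : j < m by lia.
    case: (V4 V jN) => H1 _ _; rewrite bjm in H1.
    have Ej := O'uniq O' jm3 H1.
    by move: bo'; rewrite -Ej bjm ltnn.
  exact: (V2 V j0 jN).
- move=> j jN; case: (V4 V jN) => H1 H2 H3; split => //.
  case: H2 => [->|H2]; first by left.
  right; rewrite /upd ifN_eq //; apply/eqP => E.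
  move: H2; rewrite E am => Ej.
  have := sgtg P jN; rewrite E; lia.
Qed.

End Moves.


Lemma diff_sym n a b a' b' : diff n a b a' b' -> diff n b a b' a'.
Proof. by case=> i [iN [H|H]]; exists i; split => //; [right|left]. Qed.

Lemma swap_ex n sg tg a b :
  (exists a' b', valid n tg sg a' b' /\ diff n b a a' b') ->
  exists a' b', valid n sg tg a' b' /\ diff n a b a' b'.
Proof.
by case=> a' [b' [V D]]; exists b', a'; split; [exact: valid_sym | exact: diff_sym].
Qed.

Lemma anomaly n sg tg a b m o o' : pax n sg tg -> valid n sg tg a b -> 0 < m -> m < n ->
  Ot sg m o -> Ot tg m o' ->
  (sg m = m \/ [/\ m < sg o, m < sg m, m < tg o' & m < tg m]) ->
  exists a' b', valid n sg tg a' b' /\ diff n a b a' b'.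
Proof.
move=> P V m0 mn O O' [sgm|[sgo sgm tgo' tgm]].
  case: (eqVneq (a m) m) => [am|am]; first exact: (moveF P V m0 mn O O' sgm am).
  case: (V3 V mn) => H1 H2 _.
  have bm : b m = m by case: H2 => H; [move: am; rewrite H sgm eqxx | rewrite -{1}sgm].
  have tgm : tg m = m by rewrite -{1}sgm (tgsg P).
  apply: swap_ex; exact: (moveF (pax_sym P) (valid_sym V) m0 mn O' O tgm bm).
case: (ltnP m (b m)) => bm; first exact: (moveM1 P V m0 mn O O' bm).
case: (ltnP m (a m)) => am.
  by apply: swap_ex; exact: (moveM1 (pax_sym P) (valid_sym V) m0 mn O' O am).
have om := o_lt O; have o'm := o'_lt O'.
case: (eqVneq (a m) m) => [aeq|ane].
  have bm2 : b m < m by have := V1 V m0 mn; rewrite aeq.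
  have bo : b m = o by apply: (Ouniq O bm2); case: (V4 V mn).
  exact: (move_ii P V m0 mn O O' sgm aeq bo).
have am2 : a m < m by lia.
have ao : a m = o' by apply: (O'uniq O' am2); case: (V3 V mn).
case: (eqVneq (b m) m) => [beq|bne].
  by apply: swap_ex; exact: (move_ii (pax_sym P) (valid_sym V) m0 mn O' O tgm beq ao).
have bm2 : b m < m by lia.
have bo : b m = o by apply: (Ouniq O bm2); case: (V4 V mn).
exact: (move_i P V m0 mn O O' sgm (ltnW tgm) ao bo).
Qed.

Definition uniq_valid n sg tg a b :=
  forall a' b', valid n sg tg a' b' -> ~ diff n a b a' b'.

Lemma uniq_valid_sym n sg tg a b : uniq_valid n sg tg a b -> uniq_valid n tg sg b a.
Proof.
move=> U a' b' V D; apply: (U b' a'); [exact: valid_sym | exact: diff_sym].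
Qed.

Lemma nofix n sg tg a b k o o' : pax n sg tg -> valid n sg tg a b -> uniq_valid n sg tg a b ->
  0 < k -> k < n -> Ot sg k o -> Ot tg k o' -> sg k <> k.
Proof.
move=> P V U k0 kn O O' E.
case: (anomaly P V k0 kn O O' (or_introl E)) => a' [b' [V' D]].
exact: (U a' b' V' D).
Qed.

Lemma step_row n sg tg a b k o o' : pax n sg tg -> valid n sg tg a b -> uniq_valid n sg tg a b ->
  0 < k -> k.+1 < n -> Ot sg k o -> Ot tg k o' -> exists o2, Ot sg k.+1 o2.
Proof.
move=> P V U k0 kn O O'.
have kn' : k < n by lia.
have sgk := nofix P V U k0 kn' O O'.
case: (G2 P V (isT : 0 < k.+1) kn) => i [ik Hi].
have om := o_lt O; have o'm := o'_lt O'.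
have both : ~ (k < sg o /\ k < sg k).
  move=> [h1 h2].
  have on : o < n by lia.
  have o'n : o' < n by lia.
  have tgk : k < tg k.
    case: (ltngtP k (tg k)) => // H.
      have E := Ouniq O H (eq_leq (esym (sgtg P kn'))).
      by move: h1; rewrite -E (sgtg P kn'); lia.
    by move: sgk; rewrite {1}H (sgtg P kn').
  have tgo' : k < tg o'.
    case: (ltngtP k (tg o')) => // H.
      by have := tgo' O'; lia.
    by move: h2; rewrite H (sgtg P o'n); lia.
  case: (anomaly P V k0 kn' O O' (or_intror (And4 h1 h2 tgo' tgk))) => a' [b' [V' D]].
  exact: (U a' b' V' D).
have cls : forall j, j < k.+1 -> k.+1 <= sg j -> j = o \/ j = k.
  move=> j jk Hj; case: (ltnP j k) => H; last by right; lia.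
  by left; apply: (Ouniq O H); lia.
exists i; split => // j jk Hj.
case: (cls _ jk Hj) => Ej; case: (cls _ ik Hi) => Ei; subst => //.
- by exfalso; apply: both; lia.
- by exfalso; apply: both; lia.
Qed.

Lemma tight_of_unique n sg tg a b : pax n sg tg -> 1 < n -> valid n sg tg a b ->
  uniq_valid n sg tg a b ->
  forall k, 0 < k -> k < n -> [/\ exists o, Ot sg k o, exists o, Ot tg k o & sg k <> k].
Proof.
move=> P n1 V U.
have sg0' := sg0 P V n1.
have tg0' : tg 0 <> 0.
  move=> E; apply: sg0'; have H := sgtg P (ltnW n1); rewrite E in H; exact: H.
have base : (exists o, Ot sg 1 o) /\ (exists o, Ot tg 1 o).
  split; exists 0; split => //; try lia; move=> i i1 _; lia.
have main : forall k, 0 < k -> k < n -> (exists o, Ot sg k o) /\ (exists o, Ot tg k o).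
  elim => // k IH _ kn.
  case: (posnP k) => [->|k0]; first exact: base.
  case: (IH k0 (ltnW kn)) => [[o O] [o' O']].
  split; first exact: (step_row P V U k0 kn O O').
  exact: (step_row (pax_sym P) (valid_sym V) (uniq_valid_sym U) k0 kn O' O).
move=> k k0 kn; case: (main k k0 kn) => [[o O] [o' O']]; split.
- by exists o.
- by exists o'.
- exact: (nofix P V U k0 kn O O').
Qed.


Definition Tight n (sg tg : nat -> nat) :=
  forall k, 0 < k -> k < n -> (exists o, Ot sg k o) /\ (exists o, Ot tg k o).
Definition NoFix n (sg : nat -> nat) := forall i, i < n -> sg i <> i.

Lemma Tight_sym n sg tg : Tight n sg tg -> Tight n tg sg.
Proof. by move=> T k k0 kn; case: (T k k0 kn). Qed.

Lemma NoFix_sym n sg tg : pax n sg tg -> NoFix n sg -> NoFix n tg.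
Proof.
move=> P N j jn E; apply: (N j jn).
by rewrite -{1}E (sgtg P jn).
Qed.

Lemma Ot_uniq sg k o o2 : Ot sg k o -> Ot sg k o2 -> o = o2.
Proof. by case=> h1 h2 _ [_ _ H]; apply: H. Qed.

Lemma nodiag n sg tg a b : pax n sg tg -> valid n sg tg a b -> Tight n sg tg -> NoFix n sg ->
  forall k, 0 < k -> k < n -> a k <> k.
Proof.
move=> P V T N k k0 kn ak.
case: (V3 V kn); rewrite ak => H1 _ H3.
have sgk : k < sg k by have := N k kn; lia.
have k1n : k.+1 < n by have := sgn P kn; lia.
case: (T k k0 kn) => [[o O] _].
case: (T k.+1 (isT : 0 < k.+1) k1n) => [[o2 O2] _].
have bk : b k < k by have := V1 V k0 kn; rewrite ak.
have bo : b k = o by apply: (Ouniq O bk); case: (V4 V kn).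
have ko2 : k = o2 by case: O2 => _ _ H; apply: H.
have om := o_lt O.
have sgo : sg o = k.
  have := sgo O; case: (ltnP k (sg o)) => H2 H; last by lia.
  by have := Ouniq O2 (ltn_trans om (ltnSn k)) H2; lia.
have on : o < n by lia.
have : tg k = o by rewrite -sgo (tgsg P on).
lia.
Qed.

Lemma b_char n sg tg a b : pax n sg tg -> valid n sg tg a b -> Tight n sg tg -> NoFix n sg ->
  forall k, 0 < k -> k < n -> b k < k /\ k <= sg (b k).
Proof.
move=> P V T N k k0 kn.
have bk : b k <> k :=
  nodiag (pax_sym P) (valid_sym V) (Tight_sym T) (NoFix_sym P N) k0 kn.
case: (V4 V kn) => H1 _ H3; split => //.
case: (ltngtP (b k) k) => // H.
have k0' : 0 < b k by lia.
have bn' := bn P V kn.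
have ar := V2 V k0 kn.
case: (V3 V bn') => _ _ H4.
case: (T k k0 kn) => [_ [o' O']].
have Eo := O'uniq O' ar (leq_trans (ltnW H) H4).
have tgk : k < tg k by lia.
have k1n : k.+1 < n by have := tgn P kn; lia.
case: (T k.+1 (isT : 0 < k.+1) k1n) => [_ [o2 O2]].
have e1 : k = o2 by case: O2 => _ _; apply.
have e2 : o' = o2.
  case: O2 => _ _; apply; first by have := o'_lt O'; lia.
  by rewrite -Eo; lia.
by have := o'_lt O'; lia.
Qed.

Lemma valid_unique n sg tg a b a' b' : pax n sg tg -> Tight n sg tg -> NoFix n sg ->
  valid n sg tg a b -> valid n sg tg a' b' -> forall i, i < n -> b i = b' i.
Proof.
move=> P T N V V' i iN.
case: (posnP i) => [->|i0]; first by rewrite (b0 V) (b0 V').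
case: (b_char P V T N i0 iN) => h1 h2.
case: (b_char P V' T N i0 iN) => h3 h4.
case: (T i i0 iN) => [[o O] _].
by rewrite (Ouniq O h1 h2) (Ouniq O h3 h4).
Qed.

Definition oo (sg : nat -> nat) k := find (fun i => k <= sg i) (iota 0 k).

Lemma oo0 sg : oo sg 0 = 0. Proof. by []. Qed.

Lemma oo_spec sg k : (exists i, i < k /\ k <= sg i) -> oo sg k < k /\ k <= sg (oo sg k).
Proof.
case=> i [ik Hi].
have hs : has (fun i => k <= sg i) (iota 0 k).
  by apply/hasP; exists i => //; rewrite mem_iota /=; lia.
have := hs; rewrite has_find size_iota => H; split => //.
have := nth_find 0 hs; rewrite nth_iota //.
Qed.

Lemma oo_eq sg k o : Ot sg k o -> oo sg k = o.
Proof.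
move=> O; case: (oo_spec (sg := sg) (k := k)).
  by exists o; case: O.
by apply: (Ouniq O).
Qed.

Lemma hv_exist n sg tg : pax n sg tg -> Tight n sg tg -> NoFix n sg ->
  hv n sg tg (oo tg) (oo sg).
Proof.
move=> P T N; split => //.
- move=> i i0 iN.
  case: (T i i0 iN) => [_ [o' O']]; rewrite (oo_eq O').
  case: (posnP o') => [->|o0]; first by rewrite oo0.
  have o'i := o'_lt O'.
  case: (T o' o0 (ltn_trans o'i iN)) => [[o O] _]; rewrite (oo_eq O).
  by have := o_lt O; lia.
- move=> i iN.
  have sgn' := sgn P iN.
  have sgi := N i iN.
  have rowsg : 0 < sg i -> i < sg i -> oo sg (sg i) = i.
    move=> s0 isg; case: (T (sg i) s0 sgn') => [[o O] _]; rewrite (oo_eq O).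
    by symmetry; apply: (Ouniq O).
  case: (posnP i) => [i0|i0].
    rewrite i0 oo0; split => //; right; rewrite -i0; apply: rowsg; rewrite i0 in sgi *; lia.
  case: (T i i0 iN) => [_ [o' O']]; rewrite (oo_eq O').
  have o'i := o'_lt O'.
  split; last by case: O'.
  + case: (ltnP (sg i) i) => H; last by lia.
    by have := O'uniq O' H (eq_leq (esym (tgsg P iN))); lia.
  + case: (ltngtP (sg i) i) => H.
    * by left; symmetry; apply: (O'uniq O' H); rewrite (tgsg P iN).
    * by right; apply: rowsg => //; lia.
    * by exfalso; apply: sgi.
Qed.

Lemma valid_exist n sg tg : pax n sg tg -> Tight n sg tg -> NoFix n sg ->
  valid n sg tg (oo tg) (oo sg).
Proof.
move=> P T N; split; first exact: hv_exist.
exact: (hv_exist (pax_sym P) (Tight_sym T) (NoFix_sym P N)).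
Qed.

Definition Hook n (sg : nat -> nat) k :=
  exists h, [/\ h < n, maxn h (sg h) = k & forall i, i < n -> maxn i (sg i) = k -> i = h].

Lemma hooks_of_tight n sg tg : pax n sg tg -> Tight n sg tg -> NoFix n sg ->
  forall k, 0 < k -> k.+1 < n -> Hook n sg k.
Proof.
move=> P T N k k0 k1n.
have kn : k < n by lia.
case: (T k k0 kn) => [[o O] _].
case: (T k.+1 (isT : 0 < k.+1) k1n) => [[o2 O2] _].
have om := o_lt O; have on : o < n by lia.
have sgoO := sgo O.
have sgk := N k kn.
case: (eqVneq (sg o) k) => [so|so].
  exists o; split => //; first by rewrite so; lia.
  move=> i iN; case: (leqP i (sg i)) => H.
    move=> E; have si : sg i = k by lia.
    case: (ltngtP i k) => H2.
    * by rewrite -(tgsg P iN) si -so (tgsg P on).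
    * lia.
    * by move: sgk; rewrite -{1}H2 si H2.
  move=> E; have ik : i = k by lia.
  exfalso; rewrite ik in H iN.
  have o2k := o_lt O2.
  have H3 := sgo O2.
  case: (ltnP o2 k) => H4.
    by have E2 := Ouniq O H4 (ltnW H3); move: H3; rewrite E2 so; lia.
  have : o2 = k by lia.
  by move=> E3; rewrite E3 in H3; lia.
exists k; split => //.
- case: (leqP (sg k) k) => H; first by lia.
  exfalso.
  have E1 : k = o2 by case: O2 => _ _; apply.
  have E2 : o = o2 by case: O2 => _ _; apply; lia.
  lia.
- move=> i iN; case: (leqP i (sg i)) => H.
    move=> E; have si : sg i = k by lia.
    case: (ltngtP i k) => H2.
    * by move: so; rewrite -(Ouniq O H2 (eq_leq (esym si))) si eqxx.
    * lia.
    * by [].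
  move=> E; lia.
Qed.

Lemma Hook_sym n sg tg k : pax n sg tg -> Hook n sg k -> Hook n tg k.
Proof.
move=> P [h [hn hk hu]].
exists (sg h); split.
- exact: (sgn P hn).
- by rewrite (tgsg P hn) maxnC.
- move=> j jn E.
  have tjn := tgn P jn.
  have := hu (tg j) tjn; rewrite (sgtg P jn) maxnC => /(_ E) <-.
  by rewrite (sgtg P jn).
Qed.

Lemma tight_of_hooks n sg tg : pax n sg tg -> 1 < n -> NoFix n sg ->
  (forall k, 0 < k -> k.+1 < n -> Hook n sg k) ->
  forall k, 0 < k -> k < n -> exists o, Ot sg k o.
Proof.
move=> P n1 N H.
elim => // k IH _ kn.
case: (posnP k) => [->|k0].
  exists 0; split => //; last by move=> i i1 _; lia.
  by have := N 0 (ltnW n1); lia.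
have kn' : k < n by lia.
case: (IH k0 kn') => o O.
have om := o_lt O; have on : o < n by lia.
have sgo := sgo O.
have sgk := N k kn'.
case: (H k k0 kn) => h [hn hk hu].
case: (eqVneq (sg o) k) => [so|so].
  exists k; split => //.
    case: (ltngtP k (sg k)) => // H1; last by exfalso; apply: sgk; symmetry.
    have E1 := hu k kn' ltac:(lia).
    have E2 := hu o on ltac:(lia).
    lia.
  move=> i ik Hi; case: (ltnP i k) => H1; last by lia.
  have E := Ouniq O H1 (leq_trans (leqnSn k) Hi); rewrite E so in Hi; lia.
exists o; split => //; first lia; first lia.
move=> i ik Hi; case: (ltnP i k) => H1; first by apply: (Ouniq O H1); lia.
have ik' : i = k by lia.
rewrite ik' in Hi.
exfalso.
move: hk; case: (leqP h (sg h)) => H2.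
  move=> E; have shk : sg h = k by lia.
  case: (ltngtP h k) => H3.
  - by move: so; rewrite -(Ouniq O H3 (eq_leq (esym shk))) shk eqxx.
  - lia.
  - by apply: sgk; rewrite -{1}H3 shk.
move=> E; have hk' : h = k by lia.
rewrite hk' in H2; lia.
Qed.


Section L1.
Variable n : nat.
Implicit Types (M : 'M[int]_n) (p q : 'I_n * 'I_n).

Definition has_right M p := [exists j : 'I_n, (val p.2 < val j) && vertex M (p.1, j)].
Definition has_below M p := [exists i : 'I_n, (val p.1 < val i) && vertex M (i, p.2)].
Definition XOR M := forall p, vertex M p -> ~~ is_root p -> has_above M p (+) has_left M p.

Definition near_right M q (j : 'I_n) :=
  [/\ val q.2 < val j, vertex M (q.1, j) &
      forall j' : 'I_n, val q.2 < val j' -> val j' < val j -> ~~ vertex M (q.1, j')].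
Definition near_below M q (i : 'I_n) :=
  [/\ val q.1 < val i, vertex M (i, q.2) &
      forall i' : 'I_n, val q.1 < val i' -> val i' < val i -> ~~ vertex M (i', q.2)].

Lemma near_right_ex M q : has_right M q -> exists j, near_right M q j.
Proof.
case/existsP => j0 Hj0.
case: (@arg_minnP _ j0 (fun j : 'I_n => (val q.2 < val j) && vertex M (q.1, j)) (fun j : 'I_n => val j) Hj0) => j /andP [h1 h2] hmin.
exists j; split => // j' l1 l2; apply/negP => v.
have := hmin j'; rewrite l1 v => /(_ isT); lia.
Qed.

Lemma near_below_ex M q : has_below M q -> exists i, near_below M q i.
Proof.
case/existsP => i0 Hi0.
case: (@arg_minnP _ i0 (fun i : 'I_n => (val q.1 < val i) && vertex M (i, q.2)) (fun i : 'I_n => val i) Hi0) => i /andP [h1 h2] hmin.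
exists i; split => // i' l1 l2; apply/negP => v.
have := hmin i'; rewrite l1 v => /(_ isT); lia.
Qed.

Lemma near_right_uniq M q j j' : near_right M q j -> near_right M q j' -> j = j'.
Proof.
case=> h1 h2 h3 [h1' h2' h3']; apply: val_inj.
case: (ltngtP (val j) (val j')) => // H.
  by move: (h3' j h1 H); rewrite h2.
by move: (h3 j' h1' H); rewrite h2'.
Qed.

Lemma near_below_uniq M q i i' : near_below M q i -> near_below M q i' -> i = i'.
Proof.
case=> h1 h2 h3 [h1' h2' h3']; apply: val_inj.
case: (ltngtP (val i) (val i')) => // H.
  by move: (h3' i h1 H); rewrite h2.
by move: (h3 i' h1' H); rewrite h2'.
Qed.

Lemma not_root_r q (j : 'I_n) : val q.2 < val j -> ~~ is_root (q.1, j).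
Proof. move=> H; rewrite /is_root /= negb_and; apply/orP; right; rewrite -lt0n; exact: (leq_ltn_trans (leq0n _) H). Qed.
Lemma not_root_b q (i : 'I_n) : val q.1 < val i -> ~~ is_root (i, q.2).
Proof. move=> H; rewrite /is_root /= negb_and; apply/orP; left; rewrite -lt0n; exact: (leq_ltn_trans (leq0n _) H). Qed.

Lemma child_right M q j : XOR M -> vertex M q -> near_right M q j -> is_parent M q (q.1, j).
Proof.
move=> X vq [h1 h2 h3].
have hl : has_left M (q.1, j) by apply/existsP; exists q.2; rewrite h1 /= -surjective_pairing.
have ha : ~~ has_above M (q.1, j).
  by move: (X _ h2 (not_root_r h1)); rewrite hl addbT.
rewrite /is_parent h2 (not_root_r h1) vq (negbTE ha) /= eqxx h1 /=.
apply/forallP => j'; apply/implyP => /andP [l1 l2]; exact: h3.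
Qed.

Lemma child_below M q i : XOR M -> vertex M q -> near_below M q i -> is_parent M q (i, q.2).
Proof.
move=> X vq [h1 h2 h3].
have ha : has_above M (i, q.2) by apply/existsP; exists q.1; rewrite h1 /= -surjective_pairing.
rewrite /is_parent h2 (not_root_b h1) vq ha /= eqxx h1 /=.
apply/forallP => i'; apply/implyP => /andP [l1 l2]; exact: h3.
Qed.

Lemma child_cases M q p : is_parent M q p ->
  vertex M q /\
  ((p.1 = q.1 /\ near_right M q p.2) \/ (p.2 = q.2 /\ near_below M q p.1)).
Proof.
case: p => p1 p2.
rewrite /is_parent => /andP [/andP [/andP [vp _] vq] H].
split => //; move: H.
case: ifP => _ /andP [/andP [/eqP E l] /forallP F]; simpl in *.
  right; split; first by rewrite E.
  split => //; first by rewrite E.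
  move=> i' l1 l2; move: (F i'); rewrite l1 l2 /= E; exact.
left; split; first by rewrite E.
split => //; first by rewrite E.
move=> j' l1 l2; move: (F j'); rewrite l1 l2 /= E; exact.
Qed.

Lemma children_nz_r M q : XOR M -> vertex M q -> has_right M q -> #|children M q| != 0.
Proof.
move=> X vq /near_right_ex [j H].
rewrite -lt0n; apply/card_gt0P; exists (q.1, j); rewrite inE.
exact: child_right.
Qed.

Lemma children_nz_b M q : XOR M -> vertex M q -> has_below M q -> #|children M q| != 0.
Proof.
move=> X vq /near_below_ex [i H].
rewrite -lt0n; apply/card_gt0P; exists (i, q.2); rewrite inE.
exact: child_below.
Qed.

Lemma children0 M q : ~~ has_right M q -> ~~ has_below M q -> #|children M q| = 0.
Proof.
move=> hr hb; apply/eqP; rewrite cards_eq0; apply/eqP/setP => p; rewrite !inE.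
apply/negP => /child_cases [vq [[E [h1 h2 _]]|[E [h1 h2 _]]]].
  by move: hr => /existsP; apply; exists p.2; rewrite h1 h2.
by move: hb => /existsP; apply; exists p.1; rewrite h1 h2.
Qed.

Lemma children2 M q : XOR M -> vertex M q -> has_right M q -> has_below M q -> #|children M q| = 2.
Proof.
move=> X vq /near_right_ex [j Hj] /near_below_ex [i Hi].
have -> : children M q = [set (q.1, j); (i, q.2)].
  apply/setP => -[p1 p2]; rewrite !inE; apply/idP/idP.
    case/child_cases => _ [[/= E H]|[/= E H]].
      by rewrite E -(near_right_uniq Hj H) eqxx.
    by rewrite E -(near_below_uniq Hi H) eqxx orbT.
  by case/orP => /eqP ->; [apply: child_right | apply: child_below].
rewrite cards2; case: eqP => //= E.
case: Hj => h1 _ _; case: Hi => h1' _ _.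
by move: h1'; rewrite -[i](congr1 fst E) /=; lia.
Qed.

Lemma children1 M q : XOR M -> vertex M q -> has_right M q -> ~~ has_below M q -> #|children M q| = 1.
Proof.
move=> X vq /near_right_ex [j Hj] hb.
have -> : children M q = [set (q.1, j)].
  apply/setP => -[p1 p2]; rewrite !inE; apply/idP/idP.
    case/child_cases => _ [[/= E H]|[/= E [h1 h2 _]]].
      by rewrite E -(near_right_uniq Hj H).
    by move: hb => /existsP; case; exists p1; rewrite h1 h2.
  by move=> /eqP ->; apply: child_right.
by rewrite cards1.
Qed.

Lemma children1' M q : XOR M -> vertex M q -> ~~ has_right M q -> has_below M q -> #|children M q| = 1.
Proof.
move=> X vq hr /near_below_ex [i Hi].
have -> : children M q = [set (i, q.2)].
  apply/setP => -[p1 p2]; rewrite !inE; apply/idP/idP.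
    case/child_cases => _ [[/= E [h1 h2 _]]|[/= E H]].
      by move: hr => /existsP; case; exists p2; rewrite h1 h2.
    by rewrite E -(near_below_uniq Hi H).
  by move=> /eqP ->; apply: child_below.
by rewrite cards1.
Qed.

End L1.


Definition tr (T : nat -> nat -> bool) := fun i j => T j i.

Definition GeoNat N (T : nat -> nat -> bool) (sg tg : nat -> nat) :=
  [/\ T 0 0,
      (forall i j, T i j -> i < N /\ j < N),
      (forall i j, T i j -> 0 < i + j ->
         ((exists i', i' < i /\ T i' j) \/ (exists j', j' < j /\ T i j')) /\
         ~ ((exists i', i' < i /\ T i' j) /\ (exists j', j' < j /\ T i j'))),
      (forall i j, T i j -> j <= sg i /\ i <= tg j) &
      (forall i, i < N -> T i (sg i)) /\ (forall j, j < N -> T (tg j) j)].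

Lemma GeoNat_sym N T sg tg : GeoNat N T sg tg -> GeoNat N (tr T) tg sg.
Proof.
case=> h0 hb hx hr [hl1 hl2]; split => //.
- by move=> i j /hb [].
- move=> i j /= Tij ij; case: (hx j i Tij ltac:(lia)) => [[H|H] H2].
    by split; [right | move=> [A B]; apply: H2].
  by split; [left | move=> [A B]; apply: H2].
- by move=> i j /hr [].
Qed.

Definition fa N (T : nat -> nat -> bool) i := find (T i) (iota 0 N).

Section GeoV.
Variables (N : nat) (T : nat -> nat -> bool) (sg tg : nat -> nat).
Hypotheses (P : pax N sg tg) (G : GeoNat N T sg tg).

Lemma G0 : T 0 0. Proof. by case: G. Qed.
Lemma Gb i j : T i j -> i < N /\ j < N. Proof. by case: G => _ H _ _ _; apply: H. Qed.
Lemma Gx i j : T i j -> 0 < i + j ->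
         ((exists i', i' < i /\ T i' j) \/ (exists j', j' < j /\ T i j')) /\
         ~ ((exists i', i' < i /\ T i' j) /\ (exists j', j' < j /\ T i j')).
Proof. by case: G => _ _ H _ _; apply: H. Qed.
Lemma Gr i j : T i j -> j <= sg i /\ i <= tg j. Proof. by case: G => _ _ _ H _; apply: H. Qed.
Lemma Gl i : i < N -> T i (sg i). Proof. by case: G => _ _ _ _ [H _]; apply: H. Qed.

Lemma fa_spec i : i < N -> [/\ fa N T i < N, T i (fa N T i) & forall j, j < fa N T i -> ~~ T i j].
Proof.
move=> iN; rewrite /fa.
have hs : has (T i) (iota 0 N).
  by apply/hasP; exists (sg i); [rewrite mem_iota /=; have := sgn P iN; lia | exact: Gl].
have := hs; rewrite has_find size_iota => H; split => //.
  by have := nth_find 0 hs; rewrite nth_iota.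
move=> j jf; have jN : j < N by lia.
by have := before_find 0 jf; rewrite nth_iota // add0n => ->.
Qed.

Lemma fa_min i j : T i j -> fa N T i <= j.
Proof.
move=> Tij; have [iN jN] := Gb Tij.
case: (fa_spec iN) => _ _ H; case: (leqP (fa N T i) j) => // H2.
by move: (H j H2); rewrite Tij.
Qed.

End GeoV.

Lemma fb_spec N T sg tg j : pax N sg tg -> GeoNat N T sg tg -> j < N ->
  [/\ fa N (tr T) j < N, T (fa N (tr T) j) j & forall i, i < fa N (tr T) j -> ~~ T i j].
Proof. move=> P G; exact: (fa_spec (pax_sym P) (GeoNat_sym G)). Qed.

Lemma fb_min N T sg tg i j : pax N sg tg -> GeoNat N T sg tg -> T i j -> fa N (tr T) j <= i.
Proof. move=> P G Tij; exact: (fa_min (pax_sym P) (GeoNat_sym G) (Tij : tr T j i)). Qed.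

Lemma geo_char N T sg tg i j : pax N sg tg -> GeoNat N T sg tg -> T i j ->
  fa N T i = j \/ fa N (tr T) j = i.
Proof.
move=> P G Tij; have [iN jN] := Gb G Tij.
case: (eqVneq (fa N T i) j) => [->|h1]; first by left.
case: (eqVneq (fa N (tr T) j) i) => [->|h2]; first by right.
exfalso.
have l1 := fa_min P G Tij; have l2 := fb_min P G Tij.
case: (fa_spec P G iN) => _ t1 _; case: (fb_spec P G jN) => _ t2 _.
case: (posnP (i + j)) => ij.
  have i0 : i = 0 by lia.
  have j0 : j = 0 by lia.
  by move: h1; rewrite i0 j0; have := fa_min P G (G0 G); lia.
case: (Gx G Tij ij) => _; apply; split.
  by exists (fa N (tr T) j); split => //; lia.
by exists (fa N T i); split => //; lia.
Qed.

Lemma geo_hv N T sg tg : pax N sg tg -> GeoNat N T sg tg ->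
  hv N sg tg (fa N T) (fa N (tr T)).
Proof.
move=> P G; split.
- by have := fa_min P G (G0 G); lia.
- move=> i i0 iN.
  case: (fa_spec P G iN) => an' t1 hmin.
  case: (Gx G t1 ltac:(lia)) => [[[i' [l1 l2]]|[j' [l1 l2]]] _].
    by have := fb_min P G l2; lia.
  by move: (hmin j' l1); rewrite l2.
- move=> i iN; case: (fa_spec P G iN) => an' t1 _.
  have [r1 r2] := Gr G t1.
  split => //.
  case: (geo_char P G (Gl G iN)) => H; [by left | by right].
Qed.

Lemma geo_valid N T sg tg : pax N sg tg -> GeoNat N T sg tg ->
  valid N sg tg (fa N T) (fa N (tr T)).
Proof.
move=> P G; split; first exact: geo_hv.
exact: (geo_hv (pax_sym P) (GeoNat_sym G)).
Qed.

Definition Tab N (a b : nat -> nat) i j := [&& i < N, j < N & (a i == j) || (b j == i)].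

Section VGeo.
Variables (N : nat) (sg tg a b : nat -> nat).
Hypotheses (P : pax N sg tg) (V : valid N sg tg a b).

Lemma Tab_rowmin i j : Tab N a b i j -> a i <= j.
Proof.
case/and3P => iN jN /orP [/eqP -> //|/eqP bj].
case: (posnP j) => [j0|j0].
  by move: bj; rewrite j0 (b0 V) => <-; rewrite (a0 V).
by have := V2 V j0 jN; rewrite bj; lia.
Qed.

Lemma Tab_colmin i j : Tab N a b i j -> b j <= i.
Proof.
case/and3P => iN jN /orP [/eqP aj|/eqP -> //].
case: (posnP i) => [i0|i0].
  by move: aj; rewrite i0 (a0 V) => <-; rewrite (b0 V).
by have := V1 V i0 iN; rewrite aj; lia.
Qed.

Lemma Tab_a i : i < N -> Tab N a b i (a i).
Proof. by move=> iN; rewrite /Tab iN (an P V iN) eqxx. Qed.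
Lemma Tab_b j : j < N -> Tab N a b (b j) j.
Proof. by move=> jN; rewrite /Tab jN (bn P V jN) eqxx orbT. Qed.

Hypothesis N0 : 0 < N.

Lemma ab_iff i j : j < N -> (exists i', i' < i /\ Tab N a b i' j) <-> b j < i.
Proof.
move=> jN; split.
  by case=> i' [l1 l2]; have := Tab_colmin l2; lia.
by move=> H; exists (b j); split => //; exact: Tab_b.
Qed.

Lemma le_iff i j : i < N -> (exists j', j' < j /\ Tab N a b i j') <-> a i < j.
Proof.
move=> iN; split.
  by case=> j' [l1 l2]; have := Tab_rowmin l2; lia.
by move=> H; exists (a i); split => //; exact: Tab_a.
Qed.

Lemma valid_geo : GeoNat N (Tab N a b) sg tg.
Proof.
split.
- by rewrite /Tab N0 (a0 V) eqxx.
- by move=> i j /and3P [].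
- move=> i j Tij ij; have /and3P [iN jN _] := Tij.
  rewrite (ab_iff i jN) (le_iff j iN).
  have r1 := Tab_rowmin Tij; have c1 := Tab_colmin Tij.
  case/and3P: Tij => _ _ /orP [/eqP aj|/eqP bj].
    have bji : b j <> i.
      move=> bj; case: (posnP i) => [i0|i0].
        by move: aj; rewrite i0 (a0 V); lia.
      by have := V1 V i0 iN; rewrite aj bj ltnn.
    split; [left; lia | lia].
  case: (eqVneq (a i) j) => [aj|aj].
    case: (posnP i) => [i0|i0].
      by move: aj; rewrite i0 (a0 V); lia.
    by have := V1 V i0 iN; rewrite aj bj ltnn.
  split; [right; lia | lia].
- move=> i j /and3P [iN jN /orP [/eqP <-|/eqP <-]].
    by case: (V3 V iN).
  by case: (V4 V jN).
- split.
    move=> i iN; rewrite /Tab iN (sgn P iN) /=.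
    by case: (V3 V iN) => _ [->|->] _; rewrite eqxx ?orbT.
  move=> j jN; rewrite /Tab jN (tgn P jN) /=.
  by case: (V4 V jN) => _ [->|->] _; rewrite eqxx ?orbT.
Qed.

Lemma fa_Tab i : i < N -> fa N (Tab N a b) i = a i.
Proof.
move=> iN.
have G := valid_geo.
have l1 := fa_min P G (Tab_a iN).
case: (fa_spec P G iN) => _ t _.
have := Tab_rowmin t; lia.
Qed.

End VGeo.

Section GeoRB.
Variables (N : nat) (T : nat -> nat -> bool) (sg tg : nat -> nat).
Hypotheses (P : pax N sg tg) (G : GeoNat N T sg tg).

Lemma geo_right i j : T i j -> (exists j', j < j' /\ T i j') <-> j < sg i.
Proof.
move=> Tij; have [iN jN] := Gb G Tij; split.
  by case=> j' [l1 l2]; have := Gr G l2; lia.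
by move=> H; exists (sg i); split => //; exact: (Gl G iN).
Qed.

Lemma geo_below i j : T i j -> (exists i', i < i' /\ T i' j) <-> i < tg j.
Proof.
move=> Tij; have [iN jN] := Gb G Tij; split.
  by case=> i' [l1 l2]; have := Gr G l2; lia.
move=> H; exists (tg j); split => //.
by case: G => _ _ _ _ [_ H2]; apply: H2.
Qed.

Lemma geo_rb i j : T i j -> j < sg i <-> i < tg j.
Proof.
move=> Tij; have [iN jN] := Gb G Tij; have [r1 r2] := Gr G Tij.
split => H.
  case: (ltngtP i (tg j)) => // E; first lia.
  by move: H; rewrite E (sgtg P jN) ltnn.
case: (ltngtP j (sg i)) => // E; first lia.
by move: H; rewrite E (tgsg P iN) ltnn.
Qed.

End GeoRB.


Section L4.
Variable n : nat.
Local Notation N := n.+1.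
Implicit Types (M : 'M[int]_N).

Definition TT M i j : bool := [&& i < N, j < N & vertex M (inord i, inord j)].

Lemma TT_ord M (i j : 'I_N) : TT M i j = vertex M (i, j).
Proof. by rewrite /TT !ltn_ord !inord_val. Qed.

Lemma TT_inord1 M i j : i < N -> TT M (inord i : 'I_N) j = TT M i j.
Proof. move=> iN; rewrite /TT inordK //. Qed.
Lemma TT_inord2 M i j : j < N -> TT M i (inord j : 'I_N) = TT M i j.
Proof. move=> jN; rewrite /TT inordK //. Qed.

Lemma TT_bnd M i j : TT M i j -> i < N /\ j < N.
Proof. by case/and3P. Qed.

Lemma above_iff M (i j : 'I_N) : has_above M (i, j) <-> exists i', i' < i /\ TT M i' j.
Proof.
split.
  by case/existsP => k /andP [l v]; exists k; rewrite TT_ord.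
case=> k [l t]; have [kN _] := TT_bnd t.
apply/existsP; exists (inord k); rewrite /= inordK // l /=.
by move: t; rewrite /TT inord_val => /and3P [].
Qed.

Lemma left_iff M (i j : 'I_N) : has_left M (i, j) <-> exists j', j' < j /\ TT M i j'.
Proof.
split.
  by case/existsP => k /andP [l v]; exists k; rewrite TT_ord.
case=> k [l t]; have [_ kN] := TT_bnd t.
apply/existsP; exists (inord k); rewrite /= inordK // l /=.
by move: t; rewrite /TT inord_val => /and3P [].
Qed.

Lemma right_iff M (i j : 'I_N) : has_right M (i, j) <-> exists j', j < j' /\ TT M i j'.
Proof.
split.
  by case/existsP => k /andP [l v]; exists k; rewrite TT_ord.
case=> k [l t]; have [_ kN] := TT_bnd t.
apply/existsP; exists (inord k); rewrite /= inordK // l /=.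
by move: t; rewrite /TT inord_val => /and3P [].
Qed.

Lemma below_iff M (i j : 'I_N) : has_below M (i, j) <-> exists i', i < i' /\ TT M i' j.
Proof.
split.
  by case/existsP => k /andP [l v]; exists k; rewrite TT_ord.
case=> k [l t]; have [kN _] := TT_bnd t.
apply/existsP; exists (inord k); rewrite /= inordK // l /=.
by move: t; rewrite /TT inord_val => /and3P [].
Qed.

Lemma above_nat M i j : i < N -> j < N ->
  has_above M (inord i, inord j) <-> exists i', i' < i /\ TT M i' j.
Proof.
move=> iN jN; rewrite above_iff inordK //.
by split; case=> k [l t]; exists k; split => //; move: t; rewrite TT_inord2.
Qed.

Lemma left_nat M i j : i < N -> j < N ->
  has_left M (inord i, inord j) <-> exists j', j' < j /\ TT M i j'.
Proof.
move=> iN jN; rewrite left_iff inordK //.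
by split; case=> k [l t]; exists k; split => //; move: t; rewrite TT_inord1.
Qed.

Definition sgf (s : 'S_N) i := val (s (inord i)).
Definition tgf (s : 'S_N) i := val ((s^-1)%g (inord i)).

Lemma pax_s (s : 'S_N) : pax N (sgf s) (tgf s).
Proof.
split=> i iN.
- by rewrite /sgf ltn_ord.
- by rewrite /tgf ltn_ord.
- by rewrite /sgf /tgf inord_val permK; apply: inordK.
- by rewrite /sgf /tgf inord_val permKV; apply: inordK.
Qed.

Lemma perm_mxE' (s : 'S_N) (i j : 'I_N) : (perm_mx s : 'M[int]_N) i j = ((s i == j)%:R)%R.
Proof. by rewrite /perm_mx /row_perm !mxE. Qed.

Lemma XOR_of M : is_CNM M -> XOR M.
Proof. by case. Qed.

Lemma leafE M (s : 'S_N) : leaf_mx M = perm_mx s ->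
  forall x y : 'I_N, is_leaf M (x, y) = (s x == y).
Proof.
move=> H x y; have := congr1 (fun A : 'M[int]_N => A x y) H; rewrite /= perm_mxE' !mxE.
by case: (is_leaf M (x, y)); case: (s x == y).
Qed.

Lemma dir1 M (s : 'S_N) : is_CNM M -> leaf_mx M = perm_mx s ->
  GeoNat N (TT M) (sgf s) (tgf s).
Proof.
move=> C L; have X := XOR_of C; have LE := leafE L.
case: C => _ C1 C2 _ _.
have noright : forall x y : 'I_N, s x == y -> ~~ has_right M (x, y).
  move=> x y e; move: (LE x y); rewrite e => /andP [v /eqP c].
  by apply/negP => hr; move: (children_nz_r X v hr); rewrite c.
have nobelow : forall x y : 'I_N, s x == y -> ~~ has_below M (x, y).
  move=> x y e; move: (LE x y); rewrite e => /andP [v /eqP c].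
  by apply/negP => hb; move: (children_nz_b X v hb); rewrite c.
have isv : forall x : 'I_N, vertex M (x, s x).
  by move=> x; move: (LE x (s x)); rewrite eqxx => /andP [].
split.
- rewrite /TT /=; have := C1 (ord0, ord0) isT.
  by have -> : inord 0 = ord0 :> 'I_N by apply: val_inj; rewrite /= inordK.
- exact: TT_bnd.
- move=> i j t ij; have [iN jN] := TT_bnd t.
  have v : vertex M (inord i, inord j) by move: t; rewrite /TT iN jN.
  have nr : ~~ is_root (inord i : 'I_N, inord j : 'I_N).
    by rewrite /is_root /= !inordK //; apply/negP => /andP [/eqP e1 /eqP e2]; lia.
  have := C2 _ v nr.
  have EA := above_nat M iN jN; have EL := left_nat M iN jN.
  case: (boolP (has_above M (inord i, inord j))) => ha;
    case: (boolP (has_left M (inord i, inord j))) => hl //= _.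
  + split; first by left; apply/EA.
    by move=> [_ H]; move/negP: hl; apply; apply/EL.
  + split; first by right; apply/EL.
    by move=> [H _]; move/negP: ha; apply; apply/EA.
- move=> i j t; have [iN jN] := TT_bnd t.
  move: t; rewrite /TT iN jN /= => v.
  have hr := noright (inord i) (s (inord i)) (eqxx _).
  have hb := nobelow ((s^-1)%g (inord j)) (inord j) (introT eqP (permKV s (inord j))).
  split.
    rewrite /sgf; case: (leqP j (val (s (inord i)))) => // H.
    exfalso; move/negP: hr; apply; apply/existsP; exists (inord j); rewrite /= inordK // H /=.
    done.
  rewrite /tgf; case: (leqP i (val ((s^-1)%g (inord j)))) => // H.
  exfalso; move/negP: hb; apply; apply/existsP; exists (inord i); rewrite /= inordK // H /=.
  done.
- split.
    move=> i iN; rewrite /TT iN /sgf ltn_ord /= inord_val; exact: isv.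
  move=> j jN; rewrite /TT jN /tgf ltn_ord /= inord_val.
  by have := isv ((s^-1)%g (inord j)); rewrite permKV.
Qed.


Definition mxT (T : nat -> nat -> bool) : 'M[int]_N := \matrix_(i, j) (if T i j then 1%R else 0%R).

Lemma vertex_mxT T (x y : 'I_N) : vertex (mxT T) (x, y) = T x y.
Proof. by rewrite /vertex /= mxE; case: (T x y). Qed.

Lemma TT_mxT T sg tg : GeoNat N T sg tg -> forall i j, TT (mxT T) i j = T i j.
Proof.
move=> G i j; rewrite /TT.
case: (boolP (T i j)) => t.
  have [iN jN] := Gb G t; rewrite iN jN /= vertex_mxT !inordK //.
case: (ltnP i N) => iN //=; case: (ltnP j N) => jN //=.
by rewrite vertex_mxT !inordK // (negbTE t).
Qed.

Lemma sgf_ord (s : 'S_N) (x : 'I_N) : sgf s x = s x.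
Proof. by rewrite /sgf inord_val. Qed.

Lemma dir2 T (s : 'S_N) : GeoNat N T (sgf s) (tgf s) ->
  is_CNM (mxT T) /\ leaf_mx (mxT T) = perm_mx s.
Proof.
move=> G.
have P := pax_s s.
have TE := TT_mxT G.
have X : XOR (mxT T).
  move=> [x y]; rewrite vertex_mxT => t nr.
  have xy : 0 < x + y.
    move: nr; rewrite /is_root /= negb_and => /orP [] /eqP; lia.
  have EA : has_above (mxT T) (x, y) <-> exists i', i' < x /\ T i' y.
    by rewrite above_iff; split; case=> k [l tk]; exists k; split => //; move: tk; rewrite TE.
  have EL : has_left (mxT T) (x, y) <-> exists j', j' < y /\ T x j'.
    by rewrite left_iff; split; case=> k [l tk]; exists k; split => //; move: tk; rewrite TE.
  case: (Gx G t xy) => H1 H2.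
  case: (boolP (has_above (mxT T) (x, y))) => ha;
    case: (boolP (has_left (mxT T) (x, y))) => hl //=.
  - by exfalso; apply: H2; split; [apply/EA | apply/EL].
  - exfalso; case: H1 => H.
      by move/negP: ha; apply; apply/EA.
    by move/negP: hl; apply; apply/EL.
have RB : forall x y : 'I_N, T x y -> (has_right (mxT T) (x, y) = (y < sgf s x)) /\
                                    (has_below (mxT T) (x, y) = (x < tgf s y)).
  move=> x y t; split.
    apply/idP/idP.
      by move/right_iff => [k [l tk]]; apply/(geo_right G t); exists k; rewrite -TE.
    by move/(geo_right G t) => [k [l tk]]; apply/right_iff; exists k; rewrite TE.
  apply/idP/idP.
    by move/below_iff => [k [l tk]]; apply/(geo_below G t); exists k; rewrite -TE.
  by move/(geo_below G t) => [k [l tk]]; apply/below_iff; exists k; rewrite TE.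
have lf : forall x y : 'I_N, is_leaf (mxT T) (x, y) = (s x == y).
  move=> x y; rewrite /is_leaf vertex_mxT.
  case: (boolP (T x y)) => t /=.
    have [r1 _] := Gr G t.
    have [er eb] := RB x y t.
    case: (boolP (y < sgf s x)) => H.
      have hb : has_below (mxT T) (x, y) by rewrite eb -(geo_rb P G t).
      have hr : has_right (mxT T) (x, y) by rewrite er.
      rewrite (children2 X _ hr hb); last by rewrite vertex_mxT.
      by apply/esym/eqP => E; move: H; rewrite sgf_ord E ltnn.
    have hr : ~~ has_right (mxT T) (x, y) by rewrite er.
    have hb : ~~ has_below (mxT T) (x, y).
      by rewrite eb; apply/negP => /(geo_rb P G t); apply/negP.
    rewrite (children0 hr hb) eqxx; apply/esym/eqP; apply: val_inj => /=.
    by rewrite -sgf_ord; lia.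
  apply/esym/negP => /eqP E; move/negP: t; apply.
  by have := Gl G (ltn_ord x); rewrite sgf_ord E.
split; last first.
  apply/matrixP => x y; rewrite perm_mxE' !mxE lf.
  by case: (s x == y).
split.
- by move=> i j; rewrite mxE; case: (T i j); [right | left].
- move=> [x y]; rewrite /is_root /= => /andP [/eqP x0 /eqP y0].
  by rewrite vertex_mxT x0 y0; exact: (G0 G).
- exact: X.
- split.
    move=> x; exists (s x); rewrite vertex_mxT -sgf_ord; exact: (Gl G (ltn_ord x)).
  move=> y; exists ((s^-1)%g y); rewrite vertex_mxT.
  have := Gl G (ltn_ord ((s^-1)%g y)); rewrite sgf_ord permKV //.
- move=> [x y]; rewrite vertex_mxT => t.
  have [er eb] := RB x y t.
  case: (boolP (y < sgf s x)) => H.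
    right; apply: children2 => //; first by rewrite vertex_mxT.
      by rewrite er.
    by rewrite eb -(geo_rb P G t).
  left; apply: children0; first by rewrite er.
  by rewrite eb; apply/negP => /(geo_rb P G t); apply/negP.
Qed.

Lemma mx_det M : is_CNM M -> M = mxT (TT M).
Proof.
case=> Z _ _ _ _; apply/matrixP => x y; rewrite mxE TT_ord /vertex /=.
by case: (Z x y) => ->.
Qed.

End L4.


Section L5.
Variable n : nat.
Local Notation N := n.+1.

Lemma perm_one (s : 'S_N) (x y : 'I_N) :
  ((perm_mx s : 'M[int]_N) x y == 1%R) = (s x == y).
Proof. by rewrite perm_mxE'; case: (s x == y). Qed.

Lemma Lsub_mem K (p : 'I_N * 'I_N) : (p \in Lsubset N K) = ((maxn p.1 p.2).+1 == K).
Proof.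
rewrite inE; case: p => x y /=.
apply/idP/idP.
  by case/orP => /andP [/eqP <- H]; apply/eqP; lia.
move/eqP => <-; case: (leqP x y) => H; apply/orP; [right|left]; apply/andP; split; try lia;
  apply/eqP; lia.
Qed.

Lemma hook_set (s : 'S_N) k :
  (#|[set p in Lsubset N k.+1 | (perm_mx s : 'M[int]_N) p.1 p.2 == 1%R]| = 1) <->
  Hook N (sgf s) k.
Proof.
have memS : forall p : 'I_N * 'I_N,
  (p \in [set p in Lsubset N k.+1 | (perm_mx s : 'M[int]_N) p.1 p.2 == 1%R]) =
  (maxn p.1 p.2 == k) && (s p.1 == p.2).
  move=> [[x hx] [y hy]]; rewrite !inE /= perm_one; congr (_ && _).
  apply/idP/idP => [/orP [] /andP [/eqP h1 h2] | /eqP h]; try (apply/eqP; lia).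
split.
  move/eqP/cards1P => [[x1 x2] E].
  have : (x1, x2) \in [set (x1, x2)] by rewrite inE.
  rewrite -E memS /= => /andP [/eqP mk /eqP sx].
  exists x1; split => //.
  - by rewrite sgf_ord sx.
  - move=> i iN mi.
    have : (inord i : 'I_N, s (inord i)) \in [set (x1, x2)].
      by rewrite -E memS /= inordK // eqxx andbT; apply/eqP; rewrite -mi.
    by rewrite inE => /eqP [<- _]; rewrite inordK.
case=> h [hN hk hu].
apply/eqP/cards1P; exists (inord h, s (inord h)).
apply/setP => -[x y]; rewrite memS inE /=.
apply/idP/idP.
  move=> /andP [/eqP mk /eqP sx].
  have xh : (x : nat) = h by apply: (hu x (ltn_ord x)); rewrite sgf_ord sx.
  have -> : x = inord h by apply: val_inj; rewrite /= inordK.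
  by rewrite -sx -{1}(inord_val x) xh.
move/eqP => [-> ->]; rewrite eqxx andbT inordK //.
by apply/eqP; rewrite -hk.
Qed.

Lemma diag_iff (s : 'S_N) :
  (forall i : 'I_N, (perm_mx s : 'M[int]_N) i i != 1%R) <-> NoFix N (sgf s).
Proof.
split.
  move=> H i iN E; move: (H (inord i)); rewrite perm_one.
  by move/eqP; apply; apply: val_inj; rewrite /= inordK.
move=> H i; rewrite perm_one; apply/eqP => E.
by apply: (H i (ltn_ord i)); rewrite sgf_ord E.
Qed.

End L5.


Lemma eq_fa N (T1 T2 : nat -> nat -> bool) : (forall i j, T1 i j = T2 i j) ->
  forall i, fa N T1 i = fa N T2 i.
Proof. by move=> E i; rewrite /fa; apply: eq_find => j; apply: E. Qed.

Lemma tr_Tab N a b i j : tr (Tab N a b) i j = Tab N b a i j.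
Proof. by rewrite /tr /Tab; case: (i < N); case: (j < N) => //=; rewrite orbC. Qed.

Lemma fb_Tab N sg tg a b i : pax N sg tg -> valid N sg tg a b -> 0 < N -> i < N ->
  fa N (tr (Tab N a b)) i = b i.
Proof.
move=> P V N0 iN; rewrite (@eq_fa N (tr (Tab N a b)) (Tab N b a)); last exact: tr_Tab.
exact: (fa_Tab (pax_sym P) (valid_sym V) N0 iN).
Qed.

Lemma char_T N T sg tg i j : pax N sg tg -> GeoNat N T sg tg -> i < N -> j < N ->
  T i j = (fa N T i == j) || (fa N (tr T) j == i).
Proof.
move=> P G iN jN; apply/idP/idP.
  by move=> t; case: (geo_char P G t) => ->; rewrite eqxx ?orbT.
case/orP => /eqP <-.
  by case: (fa_spec P G iN).
by case: (fb_spec P G jN).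
Qed.


Local Open Scope ring_scope.

Theorem theorem3p4 (n : nat) (P : 'M[int]_n) :
  (2 <= n)%N -> is_perm_mx P ->
  ((exists! M : 'M[int]_n, is_CNM M /\ leaf_mx M = P) <->
   ((forall k : nat, (2 <= k)%N -> (k <= n.-1)%N ->
       #|[set p in Lsubset n k | P p.1 p.2 == 1]| = 1%N)
    /\ (forall i : 'I_n, P i i != 1))).
Proof.
case: n P => [|n] P; first by [].
move=> n2 /is_perm_mxP [s ->].
have Pax := pax_s s.
have N0 : (0 < n.+1)%N by [].
split.
- case=> M [[C L] U].
  have G := dir1 C L.
  have V := geo_valid Pax G.
  have Un : uniq_valid n.+1 (sgf s) (tgf s) (fa n.+1 (TT M)) (fa n.+1 (tr (TT M))).
    move=> a' b' V' [i [iN D]].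
    have G' := valid_geo Pax V' N0.
    have [C' L'] := dir2 G'.
    have EM : M = mxT n (Tab n.+1 a' b') by apply: U.
    have E1 : forall i j, TT M i j = Tab n.+1 a' b' i j by move=> i0 j0; rewrite EM (TT_mxT G').
    have ea : fa n.+1 (TT M) i = a' i by rewrite (@eq_fa n.+1 _ _ E1) (fa_Tab Pax V' N0 iN).
    have eb : fa n.+1 (tr (TT M)) i = b' i.
      by rewrite (@eq_fa n.+1 (tr (TT M)) (tr (Tab n.+1 a' b'))) ?(fb_Tab Pax V' N0 iN) // => i0 j0; apply: E1.
    by case: D; rewrite ?ea ?eb.
  have TU := tight_of_unique Pax n2 V Un.
  have NF : NoFix n.+1 (sgf s).
    move=> i iN; case: (posnP i) => [->|i0]; first exact: (sg0 Pax V n2).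
    by case: (TU i i0 iN).
  have T : Tight n.+1 (sgf s) (tgf s).
    by move=> k k0 kn; case: (TU k k0 kn) => h1 h2 _; split.
  split; last by apply/diag_iff.
  move=> k k2 kn.
  have := @hook_set n s k.-1; rewrite prednK; last by lia.
  move=> ->; apply: (hooks_of_tight Pax T NF); lia.
- case=> [H1 H2].
  have NF : NoFix n.+1 (sgf s) by apply/diag_iff.
  have HK : forall k, (0 < k)%N -> (k.+1 < n.+1)%N -> Hook n.+1 (sgf s) k.
    move=> k k0 kn; apply/hook_set; apply: H1; lia.
  have T : Tight n.+1 (sgf s) (tgf s).
    move=> k k0 kn; split.
      exact: (tight_of_hooks Pax n2 NF HK k0 kn).
    apply: (tight_of_hooks (pax_sym Pax) n2 (NoFix_sym Pax NF) _ k0 kn).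
    by move=> k1 k10 k1n; apply: Hook_sym; [exact: Pax | exact: HK].
  have V := valid_exist Pax T NF.
  have G := valid_geo Pax V N0.
  exists (mxT n (Tab n.+1 (oo (tgf s)) (oo (sgf s)))); split; first exact: dir2.
  move=> M [C L].
  have GM := dir1 C L.
  have VM := geo_valid Pax GM.
  have eb := valid_unique Pax T NF VM V.
  have ea := valid_unique (pax_sym Pax) (Tight_sym T) (NoFix_sym Pax NF)
               (valid_sym VM) (valid_sym V).
  rewrite (mx_det C); apply/matrixP => x y; rewrite !mxE.
  rewrite (char_T Pax GM (ltn_ord x) (ltn_ord y)) eb // ea //.
  by rewrite /Tab !ltn_ord.
Qed.
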